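(* Let $\Theta$ be a typed signature. For every $\chi\in\mathcal L_{\mathrm{CL}}(P_\Theta)$: $\chi$ is true at every state of every coherent propositional coalition model over $P_\Theta$ iff $\vdash_{\mathrm{CL}_{\mathrm{Coh},\Theta}}\chi$.
   Context: A typed signature is $\Theta=(\mathrm{Ag},X,\{D_x\}_{x\in X})$ with $\mathrm{Ag}$ a finite non-empty set of agents, $X$ a finite set of variables, each $D_x$ finite non-empty. $P_\Theta=\{p_x^c\mid x\in X,c\in D_x\}$ distinct atoms; $\mathcal L_{\mathrm{CL}}(P_\Theta)$: $\chi::=\top\mid p\mid\neg\chi\mid\chi\wedge\chi'\mid[C]\chi$ ($p\in P_\Theta,C\subseteq\mathrm{Ag}$). A propositional coalition model (explicit one-step game form model) is $(S,\{\Sigma_i\}_{i\in\mathrm{Ag}},o,V)$ with $S\neq\varnothing$, each $\Sigma_i\neq\varnothing$, $o:S\times\Sigma_{\mathrm{Ag}}\to S$ where $\Sigma_C=\prod_{i\in C}\Sigma_i$, and $V:P_\Theta\to\mathcal P(S)$; $p$ true at $s$ iff $s\in V(p)$; $[C]\chi$ true at $s$ iff $\exists\alpha_C\in\Sigma_C\,\forall\beta_{\mathrm{Ag}\setminus C}$: $\chi$ true at $o(s,\alpha_C\sqcup\beta)$. It is coherent if every state satisfies $\bigwedge_{x\in X}\bigl((\bigvee_{c\in D_x}p_x^c)\wedge\bigwedge_{c\neq d}(p_x^c\to\neg p_x^d)\bigr)$. $\mathrm{CL}_{\mathrm{Coh},\Theta}$ is the Hilbert system with: all instances of propositional tautologies;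 (C1) $[C](\varphi\wedge\psi)\to[C]\varphi$; (C2) $\neg[C]\bot$; (C3) $[C]\top$; (C4) $[C]\varphi\wedge[D]\psi\to[C\cup D](\varphi\wedge\psi)$ for disjoint $C,D$; (C5) $\neg[\varnothing]\neg\varphi\to[\mathrm{Ag}]\varphi$; $\bigvee_{c\in D_x}p_x^c$ for each $x$; $p_x^c\to\neg p_x^d$ for distinct $c,d\in D_x$; rules MP and RE (from $\vdash\varphi\leftrightarrow\psi$ infer $\vdash[C]\varphi\leftrightarrow[C]\psi$). *)

(* Defs.v *)
From mathcomp Require Import all_boot.
Set Implicit Arguments.
Unset Printing Implicit Defensive.

Section CL.
Variables (Ag X : finType) (D : X -> finType).

(* L_CL(P_Theta); atoms p_x^c are  Atom x c *)
Inductive form : Type :=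
  | Top : form
  | Atom : forall x : X, D x -> form
  | Neg : form -> form
  | And : form -> form -> form
  | Box : {set Ag} -> form -> form.

Definition Bot : form := Neg Top.
Definition Or (a b : form) : form := Neg (And (Neg a) (Neg b)).
Definition Imp (a b : form) : form := Neg (And a (Neg b)).
Definition Iff (a b : form) : form := And (Imp a b) (Imp b a).
Definition bigOr (l : seq form) : form := foldr Or Bot l.

(* Instances of propositional tautologies: formulas true under every
   Boolean valuation of their maximal non-Boolean subformulas
   (atoms and [C]-formulas). *)
Fixpoint peval (v : form -> bool) (f : form) : bool :=
  match f with
  | Top => true
  | Atom _ _ => v f
  | Neg a => ~~ peval v a
  | And a b => peval v a && peval v b
  | Box _ _ => v f
  end.
Definition ptaut (f : form) : Prop := forall v, peval v f.

Inductive derivable : form -> Prop :=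
  | d_taut f : ptaut f -> derivable f
  | d_C1 (C : {set Ag}) a b : derivable (Imp (Box C (And a b)) (Box C a))
  | d_C2 (C : {set Ag}) : derivable (Neg (Box C Bot))
  | d_C3 (C : {set Ag}) : derivable (Box C Top)
  | d_C4 (C E : {set Ag}) a b : [disjoint C & E] ->
      derivable (Imp (And (Box C a) (Box E b)) (Box (C :|: E) (And a b)))
  | d_C5 a : derivable (Imp (Neg (Box set0 (Neg a))) (Box setT a))
  | d_cov (x : X) : derivable (bigOr [seq @Atom x c | c <- enum (D x)])
  | d_excl (x : X) (c d : D x) : c != d -> derivable (Imp (@Atom x c) (Neg (@Atom x d)))
  | d_MP a b : derivable a -> derivable (Imp a b) -> derivable b
  | d_RE (C : {set Ag}) a b : derivable (Iff a b) -> derivable (Iff (Box C a) (Box C b)).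

Record model : Type := Model {
  St : Type;
  St_inh : inhabited St;
  Strat : Ag -> Type;
  Strat_inh : forall i, inhabited (Strat i);
  out : St -> (forall i : Ag, Strat i) -> St;
  val : forall x : X, D x -> St -> Prop
}.

Definition join (M : model) (C : {set Ag})
  (alpha : forall i, i \in C -> Strat M i)
  (beta : forall i, i \notin C -> Strat M i) : forall i, Strat M i :=
  fun i => match (i \in C) as b return ((i \in C) = b -> Strat M i) with
           | true => fun h => alpha i h
           | false => fun h => beta i (negbT h)
           end erefl.

Fixpoint truth (M : model) (s : St M) (f : form) : Prop :=
  match f with
  | Top => True
  | Atom x c => @val M x c s
  | Neg a => ~ truth M s a
  | And a b => truth M s a /\ truth M s b
  | Box C a => exists alpha : (forall i, i \in C -> Strat M i),
                 forall beta : (forall i, i \notin C -> Strat M i),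
                   truth M (out M s (@join M C alpha beta)) a
  end.

Definition coherent (M : model) : Prop :=
  forall (s : St M) (x : X),
    (exists c : D x, @val M x c s) /\
    (forall c d : D x, c != d -> @val M x c s -> ~ @val M x d s).

End CL.

(* Main.v *)
Require Import Defs.
From mathcomp Require Import all_boot zify.
From mathcomp Require classical_sets.
From Stdlib Require Import Classical ClassicalEpsilon FunctionalExtensionality.
From Stdlib Require List.
Notation In := List.In.
Set Implicit Arguments.
Unset Strict Implicit.


Section Prop1.
Variables (Ag X : finType) (D : X -> finType).
Notation form := (@form Ag X D).
Notation derivable := (@derivable Ag X D).
Notation peval := (@peval Ag X D).

Definition bigAnd (l : list form) : form := foldr (@And Ag X D) (@Top Ag X D) l.

Lemma peval_bigAnd v l : peval v (bigAnd l) = all (peval v) l.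
Proof. by elim: l => //= a l ->. Qed.

Lemma peval_bigAndP v l : peval v (bigAnd l) <-> (forall g, In g l -> peval v g).
Proof.
elim: l => [|a l IH] /=; first by split.
split.
- move/andP=> [Ha Hl] g [<-|Hg] //. by apply IH.
- move=> H; apply/andP; split; first by apply H; left.
  apply/IH => g Hg; apply H; by right.
Qed.

Lemma peval_bigAnd_cat v l1 l2 : peval v (bigAnd (l1 ++ l2)) = peval v (bigAnd l1) && peval v (bigAnd l2).
Proof. by rewrite !peval_bigAnd all_cat. Qed.

Lemma mp1 p r : derivable p -> ptaut (Imp p r) -> derivable r.
Proof. move=> Hp Ht; apply: d_MP Hp (d_taut Ht). Qed.

Lemma mp2 p q r : derivable p -> derivable q -> ptaut (Imp p (Imp q r)) -> derivable r.
Proof. move=> Hp Hq Ht; apply: d_MP Hq _; apply: d_MP Hp (d_taut Ht). Qed.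

Definition ded (G : form -> Prop) f :=
  exists l, (forall g, In g l -> G g) /\ derivable (Imp (bigAnd l) f).

Lemma ded_thm G f : derivable f -> ded G f.
Proof.
move=> H; exists nil; split => //; apply: mp1 H _ => v /=.
by case: (peval v f).
Qed.

Lemma ded_in G f : G f -> ded G f.
Proof.
move=> H; exists (f :: nil); split; first by move=> g [<-|].
apply: d_taut => v /=; by case: (peval v f).
Qed.

Lemma ded_mp G a b : ded G a -> ded G (Imp a b) -> ded G b.
Proof.
case=> l1 [H1 D1]; case=> l2 [H2 D2]; exists (l1 ++ l2); split.
  move=> g Hg; case: (List.in_app_or _ _ _ Hg) => Hg'; [exact: H1|exact: H2].
apply: mp2 D1 D2 _ => v /=; rewrite peval_bigAnd_cat.
by case: (peval v (bigAnd l1)); case: (peval v (bigAnd l2)); case: (peval v a); case: (peval v b).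
Qed.

Lemma ded_taut1 G a b : ded G a -> ptaut (Imp a b) -> ded G b.
Proof. move=> H Ht; apply: ded_mp H (ded_thm _ (d_taut Ht)). Qed.

Lemma ded_taut2 G a b c : ded G a -> ded G b -> ptaut (Imp a (Imp b c)) -> ded G c.
Proof. move=> Ha Hb Ht; apply: ded_mp Hb (ded_taut1 Ha Ht). Qed.

Lemma ded_mono G G' f : ded G f -> (forall g, G g -> G' g) -> ded G' f.
Proof. case=> l [H1 H2] S; exists l; split => // g /H1; apply S. Qed.

Lemma ded_deduction G a b : ded (fun g => G g \/ g = a) b -> ded G (Imp a b).
Proof.
case=> l [Hl Dl].
have [l' [Hl' Hv]] : exists l', (forall g, In g l' -> G g) /\
    forall v, peval v a -> peval v (bigAnd l') -> peval v (bigAnd l).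
  elim: l Hl {Dl} => [|g l IH] Hl.
    by exists nil; split.
  have [|l' [H1 H2]] := IH; first by move=> h Hh; apply Hl; right.
  case: (Hl g (or_introl erefl)) => [Gg|->].
  - exists (g :: l'); split; first by move=> h [<-|/H1].
    by move=> v Ha /= /andP [-> /(H2 v Ha)].
  - exists l'; split => // v Ha Hl' /=; rewrite Ha; exact: H2.
exists l'; split => //; apply: mp1 Dl _ => v /=.
move: (Hv v); case: (peval v (bigAnd l')); case: (peval v a); case: (peval v (bigAnd l)); case: (peval v b) => //= H; by move: (H isT isT).
Qed.

Definition consistent G := ~ ded G (@Bot Ag X D).
Definition mcs G := consistent G /\ forall f, G f \/ G (@Neg Ag X D f).

Lemma mcs_ded G f : mcs G -> ded G f -> G f.
Proof.
move=> [HC Hm] Hf; case: (Hm f) => // Hn; exfalso; apply HC.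
apply: ded_taut2 Hf (ded_in Hn) _ => v /=; by case: (peval v f).
Qed.

Lemma mcs_neg G f : mcs G -> (G (Neg f) <-> ~ G f).
Proof.
move=> HG; split.
- move=> Hn Hf; apply HG.1; apply: ded_taut2 (ded_in Hf) (ded_in Hn) _ => v /=; by case: (peval v f).
- by case: (HG.2 f).
Qed.

Lemma mcs_and G a b : mcs G -> (G (And a b) <-> G a /\ G b).
Proof.
move=> HG; split.
- move=> H; split; apply: (mcs_ded HG); apply: ded_taut1 (ded_in H) _ => v /=;
  by case: (peval v a); case: (peval v b).
- move=> [Ha Hb]; apply: (mcs_ded HG); apply: ded_taut2 (ded_in Ha) (ded_in Hb) _ => v /=;
  by case: (peval v a); case: (peval v b).
Qed.

Lemma mcs_thm G f : mcs G -> derivable f -> G f.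
Proof. move=> HG H; apply: (mcs_ded HG); exact: ded_thm. Qed.

Lemma mcs_imp G a b : mcs G -> G (Imp a b) -> G a -> G b.
Proof.
move=> HG H1 H2; apply: (mcs_ded HG); apply: ded_mp (ded_in H2) (ded_in H1).
Qed.

End Prop1.


Section Lind.
Variables (Ag X : finType) (D : X -> finType).
Notation form := (@form Ag X D).

Lemma lindenbaum (T0 : form -> Prop) : consistent T0 ->
  exists G, mcs G /\ forall f, T0 f -> G f.
Proof.
move=> HT0.
pose P := fun S : form -> Prop => consistent (fun f => T0 f \/ S f).
have [A [PA Amax]] : exists A, P A /\ forall B, classical_sets.proper A B -> ~ P B.
  apply: classical_sets.Zorn_bigcup => F FP Ftot.
  rewrite /P /consistent => Hd; case: Hd => l [Hl Dl].
  have [Y [HY HlY]] : exists Y : form -> Prop, (Y = (fun _ => False) \/ F Y) /\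
       forall g, In g l -> T0 g \/ Y g.
    elim: l Hl {Dl} => [|g l IH] Hl.
      by exists (fun _ => False); split; [left|].
    have [|Y [HY HlY]] := IH; first by move=> h Hh; apply Hl; right.
    case: (Hl g (or_introl erefl)) => [Tg|[Z FZ Zg]].
    - exists Y; split => // h [<-|Hh]; [by left|exact: HlY].
    - case: HY => [EY|FY].
      + exists Z; split; first by right.
        move=> h [<-|Hh]; first by right.
        by case: (HlY h Hh) => [?|]; [left|rewrite EY].
      + case: (Ftot _ _ FY FZ) => [YZ|ZY].
        * exists Z; split; first by right.
          move=> h [<-|Hh]; first by right.
          by case: (HlY h Hh) => [?|/YZ]; [left|right].
        * exists Y; split; first by right.
          move=> h [<-|Hh]; first by right; apply ZY.
          exact: HlY.
  have : P Y.
    case: HY => [->|/FP //]; rewrite /P => Hd; apply: HT0.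
    refine (ded_mono Hd _). by move=> g [|].
  apply; exists l; split => //.
exists (fun f => T0 f \/ A f); split; last by move=> f; left.
split => //.
move=> f; apply: NNPP => /not_or_and [Hf Hnf].
have H1 : ded (fun g => (T0 g \/ A g) \/ g = f) (@Bot Ag X D).
  apply: NNPP => Hc; apply: (Amax (fun g => A g \/ g = f)).
  - split; first by move=> g; left.
    by move=> Hs; apply: Hf; right; exact: (Hs f (or_intror erefl)).
  - rewrite /P /consistent => Hd; apply: Hc; refine (ded_mono Hd _) => g.
    by case=> [?|[?|?]]; [left; left|left; right|right].
have H2 : ded (fun g => (T0 g \/ A g) \/ g = Neg f) (@Bot Ag X D).
  apply: NNPP => Hc; apply: (Amax (fun g => A g \/ g = Neg f)).
  - split; first by move=> g; left.
    by move=> Hs; apply: Hnf; right; exact: (Hs _ (or_intror erefl)).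
  - rewrite /P /consistent => Hd; apply: Hc; refine (ded_mono Hd _) => g.
    by case=> [?|[?|?]]; [left; left|left; right|right].
apply: PA.
apply: ded_taut2 (ded_deduction H1) (ded_deduction H2) _ => v /=.
by case: (peval v f).
Qed.

End Lind.


Section Sound.
Variables (Ag X : finType) (D : X -> finType).
Notation form := (@form Ag X D).

Lemma join_in (M : @model Ag X D) (C : {set Ag}) alpha beta i (h : i \in C) :
  @join Ag X D M C alpha beta i = alpha i h.
Proof.
rewrite /join; move: (erefl (i \in C)); set b := {2 3}(i \in C).
clearbody b; case: b => e /=; first by rewrite (bool_irrelevance e h).
by exfalso; move: h; rewrite e.
Qed.

Lemma join_out (M : @model Ag X D) (C : {set Ag}) alpha beta i (h : i \notin C) :
  @join Ag X D M C alpha beta i = beta i h.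
Proof.
rewrite /join; move: (erefl (i \in C)); set b := {2 3}(i \in C).
clearbody b; case: b => e /=; first by exfalso; move: h; rewrite e.
by rewrite (bool_irrelevance (negbT e) h).
Qed.

Definition tv (M : @model Ag X D) (s : St M) (g : form) : bool :=
  if excluded_middle_informative (truth M s g) then true else false.

Lemma tvP M s g : @tv M s g <-> truth M s g.
Proof. rewrite /tv; case: excluded_middle_informative => //. Qed.

Lemma peval_tv M s f : peval (@tv M s) f <-> truth M s f.
Proof.
elim: f => //= [x c|a IH|a IHa b IHb|C a _]; try exact: tvP.
- split => [/negP H Ha|H]; first by apply H; apply/IH.
  by apply/negP => /IH.
- split => [/andP [/IHa ? /IHb ?]//|[/IHa -> /IHb ->]//].
Qed.

Lemma inh_strat (M : @model Ag X D) i : Strat M i.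
Proof. exact: (epsilon (Strat_inh M i) (fun _ => True)). Qed.

Lemma truth_bigOr M s x (l : seq (D x)) c : c \in l -> truth M s (@Atom Ag X D x c) ->
  truth M s (bigOr [seq @Atom Ag X D x c | c <- l]).
Proof.
elim: l => //= d l IH; rewrite in_cons => /orP [/eqP ->|Hc] Ht [H1 H2] //.
by apply: H2; apply: IH.
Qed.

Lemma soundness f : derivable f -> forall M : @model Ag X D, coherent M -> forall s, truth M s f.
Proof.
elim => {f}.
- move=> f Hf M HM s; apply/peval_tv; exact: Hf.
- move=> C a b M HM s /= [[alpha H] H2]; apply: H2; exists alpha => beta.
  by case: (H beta).
- move=> C M HM s /= [alpha H].
  by apply: (H (fun i _ => inh_strat M i)).
- move=> C M HM s /=; by exists (fun i _ => inh_strat M i).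
- move=> C E a b HCE M HM s; rewrite /Imp /= => -[[[a1 H1] [a2 H2]] Hn]; apply: Hn.
  pose alpha := fun i (h : i \in C :|: E) =>
     @join Ag X D M C a1 (fun j _ => @join Ag X D M E a2 (fun k _ => inh_strat M k) j) i.
  exists alpha => beta.
  set sg := @join Ag X D M (C :|: E) alpha beta.
  split.
  + have -> : sg = @join Ag X D M C a1 (fun j _ => sg j); last exact: H1.
    apply: functional_extensionality_dep => i.
    case: (boolP (i \in C)) => hi; last by rewrite join_out.
    rewrite join_in /sg join_in ?in_setU ?hi // => h.
    by rewrite /alpha join_in.
  + have -> : sg = @join Ag X D M E a2 (fun j _ => sg j); last exact: H2.
    apply: functional_extensionality_dep => i.
    case: (boolP (i \in E)) => hi; last by rewrite join_out.
    have hC : i \notin C by rewrite (disjointFl HCE hi).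
    rewrite join_in /sg join_in ?in_setU ?hi ?orbT // => h.
    by rewrite /alpha /= (join_out _ _ hC) join_in.
- move=> a M HM s; rewrite /Imp /= => -[H1 H2]; apply: H2.
  pose alpha0 := fun i (h : i \in (set0 : {set Ag})) => inh_strat M i.
  have [beta Hb] : exists beta, truth M (out M s (@join Ag X D M set0 alpha0 beta)) a.
    apply: NNPP => Hne; apply: H1; exists alpha0 => beta Hb; apply: Hne; by exists beta.
  exists (fun i _ => @join Ag X D M set0 alpha0 beta i) => beta'.
  have -> // : @join Ag X D M setT (fun i _ => @join Ag X D M set0 alpha0 beta i) beta' =
     @join Ag X D M set0 alpha0 beta.
  apply: functional_extensionality_dep => i.
  by rewrite join_in ?in_setT.
- move=> x M HM s; case: (HM s x) => [[c Hc] _].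
  apply: (truth_bigOr (c := c)) => //; by rewrite mem_enum.
- move=> x c d Hcd M HM s; rewrite /Imp /= => -[Hc Hd]; apply: Hd.
  exact: (proj2 (HM s x) c d Hcd Hc).
- move=> a b _ Ha _ Hab M HM s; move: (Hab M HM s); rewrite /Imp /= => Hn.
  apply: NNPP => Hb; apply: Hn; split => //; exact: Ha.
- move=> C a b _ H M HM s /=.
  have Hab : forall t, truth M t a <-> truth M t b.
    move=> t; move: (H M HM t); rewrite /Iff /Imp /= => [[H1 H2]]; split => Hx; apply: NNPP => Hy;
    [apply: H1|apply: H2]; split => //.
  rewrite /Iff /Imp /=.
  split => -[[al Hal] Hn]; apply: Hn; exists al => be; apply/Hab; exact: Hal.
Qed.
End Sound.


Section Box.
Variables (Ag X : finType) (D : X -> finType).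
Notation form := (@form Ag X D).
Notation Box := (@Box Ag X D).
Notation And := (@And Ag X D).
Notation Top := (@Top Ag X D).

Lemma taut_iff (a b : form) : (forall v, peval v a = peval v b) -> ptaut (Iff a b).
Proof. move=> H v /=; rewrite H; by case: (peval v b). Qed.

Lemma mcs_RE G C (a b : form) : mcs G -> derivable (Iff a b) -> G (Box C a) -> G (Box C b).
Proof.
move=> HG Hab Ha; have H := d_RE C Hab.
apply: (mcs_ded HG); apply: ded_taut2 (ded_in Ha) (ded_thm _ H) _ => v /=.
by case: (v (Box C a)); case: (v (Box C b)).
Qed.

Lemma mcs_mono G C (a b : form) : mcs G -> derivable (Imp a b) -> G (Box C a) -> G (Box C b).
Proof.
move=> HG Hab Ha.
have H1 : G (Box C (And b a)).
  apply: mcs_RE HG _ Ha; apply: mp1 Hab _ => v /=.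
  by case: (peval v a); case: (peval v b).
exact: (mcs_imp HG (mcs_thm HG (d_C1 C b a)) H1).
Qed.

Lemma mcs_coal G (C C' : {set Ag}) (a : form) : mcs G -> C \subset C' -> G (Box C a) -> G (Box C' a).
Proof.
move=> HG sub Ha.
have Hdis : [disjoint C & C' :\: C].
  rewrite disjoint_subset; apply/subsetP => x Hx; rewrite !inE Hx //.
have H3 := mcs_thm HG (d_C3 X D (C' :\: C)).
have H4 := mcs_imp HG (mcs_thm HG (d_C4 C (C' :\: C) a Top Hdis)) (proj2 (mcs_and _ _ HG) (conj Ha H3)).
have -> : C' = C :|: (C' :\: C).
  apply/setP => x; rewrite !inE; case: (boolP (x \in C)) => //= Hx.
  by rewrite (subsetP sub x Hx).
exact: (mcs_imp HG (mcs_thm HG (d_C1 _ a Top)) H4).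
Qed.

Lemma mcs_bot G : mcs G -> ~ G (@Bot Ag X D).
Proof. move=> HG H; apply: HG.1; exact: ded_in. Qed.

End Box.


Section Canon.
Variables (Ag X : finType) (D : X -> finType).
Notation form := (@form Ag X D).
Notation Box := (@Box Ag X D).
Notation And := (@And Ag X D).
Notation Top := (@Top Ag X D).
Notation Neg := (@Neg Ag X D).
Implicit Types (ps : seq ({set Ag} * form)) (p q : ({set Ag} * form)).

Definition CStrat := (({set Ag} * form) * (({set Ag} * form) * nat))%type.
Definition dflt : CStrat := ((set0, Top), ((set0, Top), 0)).

Definition dict (sg : Ag -> CStrat) : option Ag :=
  [pick i | (enum_rank i : nat) == (\sum_(j : Ag) (sg j).2.2) %% #|Ag|].

Definition inI (G : form -> Prop) (sg : Ag -> CStrat) (p : {set Ag} * form) :=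
  G (Box p.1 p.2) /\ forall a, a \in p.1 -> (sg a).1 = p.

Definition compat (G : form -> Prop) (sg : Ag -> CStrat) (q : {set Ag} * form) :=
  (exists d, dict sg = Some d /\ (sg d).2.1 = q) /\ G (Neg (Box q.1 q.2)) /\
  forall p, inI G sg p -> p.1 \subset q.1.

Definition Tset G sg (f : form) :=
  (exists p, inI G sg p /\ f = p.2) \/ (exists q, compat G sg q /\ f = Neg q.2).

Definition U (ps : seq ({set Ag} * form)) : {set Ag} := foldr (fun p S => p.1 :|: S) set0 ps.
Definition bigAndP (ps : seq ({set Ag} * form)) : form := foldr (fun p acc => And p.2 acc) Top ps.

Lemma bigAndP_in v ps p : peval v (bigAndP ps) -> In p ps -> peval v p.2.
Proof.
elim: ps => //= q ps IH /andP [H1 H2] [<-|Hp] //; exact: IH.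
Qed.

Lemma U_in ps p : In p ps -> p.1 \subset U ps.
Proof.
elim: ps => //= q ps IH [<-|Hp]; first exact: subsetUl.
apply: subset_trans (IH Hp) (subsetUr _ _).
Qed.

Lemma U_mem ps a : a \in U ps -> exists p, In p ps /\ a \in p.1.
Proof.
elim: ps => /= [|q ps IH]; first by rewrite in_set0.
rewrite in_setU => /orP [Ha|/IH [p [Hp Ha]]]; first by exists q; split => //; left.
by exists p; split => //; right.
Qed.

Lemma U_sub ps (C : {set Ag}) : (forall p, In p ps -> p.1 \subset C) -> U ps \subset C.
Proof.
elim: ps => /= [|q ps IH] H; first exact: sub0set.
rewrite subUset (H q (or_introl erefl)) IH // => p Hp; apply: H; by right.
Qed.

Lemma inI_box (G : form -> Prop) (sg : Ag -> CStrat) ps : mcs G -> (forall p, In p ps -> inI G sg p) ->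
  G (Box (U ps) (bigAndP ps)).
Proof.
move=> HG; elim: ps => /= [|p ps IH] Hps.
  exact: mcs_thm HG (d_C3 X D set0).
have IH' := IH (fun q Hq => Hps q (or_intror Hq)).
have [Hp1 Hp2] := Hps p (or_introl erefl).
case: (classic (In p ps)) => Hin.
- have -> : p.1 :|: U ps = U ps by apply/setUidPr; exact: U_in.
  apply: mcs_RE HG _ IH'; apply: d_taut; apply: taut_iff => v /=.
  case E: (peval v (bigAndP ps)) => /=; last by rewrite andbF.
  by rewrite (bigAndP_in E Hin).
- have Hdis : [disjoint p.1 & U ps].
    rewrite disjoint_subset; apply/subsetP => a Ha; rewrite !inE; apply/negP => Hu.
    have [q [Hq Haq]] := U_mem Hu.
    have [_ Hq2] := Hps q (or_intror Hq).
    apply: Hin; have <- : q = p by rewrite -(Hq2 a Haq) (Hp2 a Ha).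
    exact: Hq.
  exact: (mcs_imp HG (mcs_thm HG (d_C4 p.1 (U ps) p.2 (bigAndP ps) Hdis))
    (proj2 (mcs_and _ _ HG) (conj Hp1 IH'))).
Qed.

Lemma compat_uniq (G : form -> Prop) (sg : Ag -> CStrat) q q' : compat G sg q -> compat G sg q' -> q = q'.
Proof.
move=> [[d [Hd Hq]] _] [[d' [Hd' Hq']] _].
move: Hd'; rewrite Hd => -[Edd]; by rewrite -Hq -Hq' Edd.
Qed.

Lemma Tset_consistent (G : form -> Prop) (sg : Ag -> CStrat) : mcs G -> consistent (Tset G sg).
Proof.
move=> HG [l [Hl Dl]].
have [ps [Hps Hlps]] : exists ps, (forall p, In p ps -> inI G sg p) /\
   forall f, In f l -> (exists p, In p ps /\ f = p.2) \/ (exists q, compat G sg q /\ f = Neg q.2).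
  elim: l Hl {Dl} => [|g l IH] Hl; first by exists nil; split.
  have [|ps [H1 H2]] := IH; first by move=> h Hh; apply: Hl; right.
  case: (Hl g (or_introl erefl)) => [[p [Hp ->]]|[q [Hq ->]]].
  - exists (p :: ps); split; first by move=> r [<-|/H1].
    move=> f [<-|/H2 [[r [Hr ->]]|Hf]].
    + by left; exists p; split => //; left.
    + by left; exists r; split => //; right.
    + by right.
  - exists ps; split => //. move=> f [<-|/H2 //]. by right; exists q.
case: (classic (exists q, compat G sg q)) => [[q0 Hq0]|Hnq].
- have Himp : derivable (Imp (bigAndP ps) q0.2).
    apply: mp1 Dl _ => v /=.
    have Hl' : peval v (bigAndP ps) -> ~~ peval v q0.2 -> peval v (bigAnd l).
      move=> E1 E2; apply/peval_bigAndP => f /Hlps [[p [Hp ->]]|[q [Hq ->]]].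
        exact: bigAndP_in E1 Hp.
      by rewrite (compat_uniq Hq Hq0) /=.
    move: Hl'; case: (peval v (bigAndP ps)); case: (peval v q0.2);
      case: (peval v (bigAnd l)) => //= H; by move: (H isT isT).
  have H1 := mcs_mono HG Himp (inI_box HG Hps).
  have Hsub : U ps \subset q0.1.
    by apply: U_sub => p /Hps /(proj2 (proj2 Hq0)).
  have H2 := mcs_coal HG Hsub H1.
  case: Hq0 => _ [Hn _].
  by apply/(mcs_neg _ HG): Hn.
- have Hiff : derivable (Iff (bigAndP ps) (@Bot Ag X D)).
    apply: mp1 Dl _ => v /=.
    have Hl' : peval v (bigAndP ps) -> peval v (bigAnd l).
      move=> E1; apply/peval_bigAndP => f /Hlps [[p [Hp ->]]|[q [Hq _]]].
        exact: bigAndP_in E1 Hp.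
      by exfalso; apply: Hnq; exists q.
    move: Hl'; case: (peval v (bigAndP ps));
      case: (peval v (bigAnd l)) => //= H; by move: (H isT).
  have H1 := mcs_RE HG Hiff (inI_box HG Hps).
  by apply/(mcs_neg _ HG): (mcs_thm HG (d_C2 X D (U ps))).
Qed.

End Canon.


Section Model.
Variables (Ag X : finType) (D : X -> finType).
Notation form := (@form Ag X D).
Notation Box := (@Box Ag X D).
Notation And := (@And Ag X D).
Notation Top := (@Top Ag X D).
Notation Neg := (@Neg Ag X D).
Notation CStrat := (@CStrat Ag X D).

Lemma force (a0 : Ag) (g : nat -> Ag -> CStrat) :
  (forall n i, i != a0 -> g n i = g 0 i) -> (forall n, (g n a0).2.2 = n) ->
  exists n, dict (g n) = Some a0.
Proof.
move=> Hg Ha.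
set R := \sum_(i | i != a0) (g 0 i).2.2.
have Hsum : forall n, \sum_(j : Ag) (g n j).2.2 = n + R.
  move=> n; rewrite (bigD1 a0) //= Ha; congr (_ + _).
  by apply: eq_bigr => i Hi; rewrite Hg.
have k0 : 0 < #|Ag| by apply/card_gt0P; exists a0.
set k := #|Ag| in k0 *.
set r := (enum_rank a0 : nat).
have rk : r < k by rewrite /r /k; exact: ltn_ord.
exists (r + (k - R %% k)).
rewrite /dict; case: pickP => [x /eqP Hx|H].
- congr Some; apply: enum_rank_inj; apply: val_inj => /=.
  rewrite Hx Hsum -/r.
  have Hm := ltn_pmod R k0.
  have -> : r + (k - R %% k) + R = (R %/ k).+1 * k + r.
    move: (divn_eq R k) Hm; move: (R %/ k) (R %% k) => q m HR Hm'; lia.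
  by rewrite modnMDl modn_small.
- exfalso; move: (H a0) => /negP; apply; apply/eqP.
  rewrite Hsum -/r.
  have Hm := ltn_pmod R k0.
  have -> : r + (k - R %% k) + R = (R %/ k).+1 * k + r.
    move: (divn_eq R k) Hm; move: (R %/ k) (R %% k) => q m HR Hm'; lia.
  by rewrite modnMDl modn_small.
Qed.

Definition CSt := {G : form -> Prop | mcs G}.

Definition cout (w : CSt) (s : CSt) (sg : Ag -> CStrat) : CSt :=
  epsilon (inhabits w) (fun E : CSt => forall f, Tset (sval s) sg f -> sval E f).

Lemma cout_spec w s sg f : Tset (sval s) sg f -> sval (cout w s sg) f.
Proof.
have [G [HG HT]] := lindenbaum (@Tset_consistent _ _ _ (sval s) sg (svalP s)).
have := @epsilon_spec _ (inhabits w) (fun E : CSt => forall f, Tset (sval s) sg f -> sval E f).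
move=> /(_ (ex_intro _ (exist _ G HG) HT)) H Hf; exact: H.
Qed.

Definition cmodel (w : CSt) : @model Ag X D :=
  @Model Ag X D CSt (inhabits w) (fun _ => CStrat) (fun _ => inhabits (dflt Ag D)) (cout w)
    (fun x c (s : CSt) => sval s (@Atom Ag X D x c)).

Lemma truth_lemma w f : forall s : CSt, truth (cmodel w) s f <-> sval s f.
Proof.
elim: f => [|x c|a IH|a IHa b IHb|C a IH] s /=.
- split => // _; apply: mcs_thm (svalP s) _; apply: d_taut => v //.
- by [].
- rewrite IH; exact: iff_sym (mcs_neg _ (svalP s)).
- rewrite IHa IHb; exact: iff_sym (mcs_and _ _ (svalP s)).
- have HG := svalP s.
  split.
  + move=> [alpha Hal]; apply: NNPP => Hn.
    have HnB : sval s (Neg (Box C a)) by apply/(mcs_neg _ HG).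
    case: (boolP (C == setT)) => [/eqP EC|NC].
    * have H0 : sval s (Box set0 (Neg a)).
        case: (proj2 HG (Box set0 (Neg a))) => // Hn0; exfalso; apply: Hn; rewrite EC.
        exact: mcs_imp HG (mcs_thm HG (d_C5 a)) Hn0.
      have /IH HD := Hal (fun i _ => dflt Ag D).
      have : sval (cout w s (@join Ag X D (cmodel w) C alpha (fun i _ => dflt Ag D))) (Neg a).
        apply: cout_spec; left; exists (set0, Neg a); split => //; split => // b.
        by rewrite in_set0.
      by move/(mcs_neg _ (svalP _)).
    * have [a0 Ha0] : exists a0, a0 \notin C.
        apply: NNPP => H; move/negP: NC; apply; apply/eqP/setP => x; rewrite in_setT.
        by apply/negPn/negP => Hx; apply: H; exists x.
      pose beta n := fun i (_ : i \notin C) =>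
        (if i == a0 then ((set0, Top), ((C, a), n)) else dflt Ag D) : CStrat.
      pose g n := @join Ag X D (cmodel w) C alpha (beta n).
      have [n Hn'] : exists n, dict (g n) = Some a0.
        apply: force.
        - move=> n i Hi; rewrite /g; case: (boolP (i \in C)) => hi; first by rewrite !join_in.
          by rewrite !(join_out _ _ hi) /beta (negbTE Hi).
        - by move=> n; rewrite /g (join_out _ _ Ha0) /beta eqxx.
      have /IH HD := Hal (beta n).
      have : sval (cout w s (g n)) (Neg a).
        apply: cout_spec; right; exists (C, a); split => //; split.
          by exists a0; split => //; rewrite /g (join_out _ _ Ha0) /beta eqxx.
        split => // p [Hp1 Hp2]; apply/subsetP => b Hb; apply: NNPP => Hbc.
        have Hbc' : b \notin C by apply/negP.
        have := Hp2 b Hb; rewrite /g (join_out _ _ Hbc') /beta.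
        by case: (b == a0) => /= Ep; move: Hb; rewrite -Ep /= in_set0.
      by move/(mcs_neg _ (svalP _)).
  + move=> HB; exists (fun i _ => ((C, a), ((set0, Top), 0)) : CStrat) => beta.
    apply/IH; apply: cout_spec; left; exists (C, a); split => //; split => // b Hb.
    by rewrite join_in.
Qed.

Lemma mcs_bigOr G x (l : seq (D x)) : mcs G ->
  G (bigOr [seq @Atom Ag X D x c | c <- l]) -> exists c, G (@Atom Ag X D x c).
Proof.
move=> HG; elim: l => /= [|c l IH] H; first by exfalso; apply: mcs_bot HG H.
case: (proj2 HG (@Atom Ag X D x c)) => [Hc|Hn]; first by exists c.
apply: IH; apply: (mcs_ded HG); apply: ded_taut2 (ded_in H) (ded_in Hn) _ => v /=.
by case: (v (@Atom Ag X D x c)); case: (peval v (bigOr [seq @Atom Ag X D x c | c <- l])).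
Qed.

Lemma cmodel_coherent w : coherent (cmodel w).
Proof.
move=> s x; split.
- apply: (mcs_bigOr (svalP s)); exact: mcs_thm (svalP s) (d_cov Ag X D x).
- move=> c d Hcd /= Hc Hd.
  have := mcs_imp (svalP s) (mcs_thm (svalP s) (d_excl Ag X D x c d Hcd)) Hc.
  by move/(mcs_neg _ (svalP s)).
Qed.

End Model.


Unset Implicit Arguments.
Theorem mainTheorem8 (Ag X : finType) (D : X -> finType)
  (HAg : 0 < #|Ag|) (HD : forall x : X, 0 < #|D x|) (chi : @form Ag X D) :
  (forall (M : @model Ag X D), coherent M -> forall s : St M, @truth Ag X D M s chi)
  <-> @derivable Ag X D chi.
Proof.
split; last by move=> H M HM s; exact: soundness H M HM s.
move=> Hall; apply: NNPP => Hnd.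
have Hc : consistent (fun g => g = @Neg Ag X D chi).
  case=> l [Hl Dl]; apply: Hnd; apply: mp1 Dl _ => v /=.
  have : ~~ peval v chi -> peval v (bigAnd l).
    move=> Hn; apply/peval_bigAndP => g /Hl -> //.
  case: (peval v chi); case: (peval v (bigAnd l)) => //= H; by move: (H isT).
have [G0 [HG0 HT]] := lindenbaum Hc.
pose w : @CSt Ag X D := exist _ G0 HG0.
have /truth_lemma H := Hall (cmodel w) (@cmodel_coherent _ _ _ w) w.
have := HT _ erefl; by move/(mcs_neg _ HG0).
Qed.
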